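(* Given $f:\{0,1\}^n\to\mathbb{R}$, there exists $g:\{0,1\}^{n+1}\to\mathbb{R}$ such that: (1) if $f$ is monotonically non-increasing, then $g$ is submodular; (2) if $f$ is $\epsilon$-far from being monotonically non-increasing, then $g$ is $\epsilon/2$-far from being submodular; (3) each value $g(z)$ can be computed by looking at (at most) $2$ values of $f$.
   Context: $f$ is monotonically non-increasing if $f(x)\ge f(y)$ whenever $x\le y$ coordinatewise. $g$ is submodular if $g(x+\mathbf{e}_i)-g(x)\ge g(y+\mathbf{e}_i)-g(y)$ for all $i$ and $x\le y$ with $x_i=y_i=0$, where $\mathbf{e}_i$ is the $i$-th standard basis vector. A function on a hypercube $\{0,1\}^m$ is $\epsilon$-far from a property if every function with the property differs from it on more than an $\epsilon$ fraction of the $2^m$ points. *)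

(* Defs.v *)
From mathcomp Require Import all_boot all_order all_algebra.
From mathcomp Require Import reals.
Set Implicit Arguments. Unset Strict Implicit. Unset Printing Implicit Defensive.
Import Order.TTheory GRing.Theory Num.Theory.
Local Open Scope ring_scope.

(* The hypercube {0,1}^m : bit vectors indexed by 'I_m (true = 1). *)
Definition cube (m : nat) := {ffun 'I_m -> bool}.

Definition cle (m : nat) (x y : cube m) : Prop := forall i, (x i <= y i)%N.

(* x + e_i, used only when x_i = 0: set coordinate i to 1 *)
Definition adde (m : nat) (x : cube m) (i : 'I_m) : cube m :=
  [ffun j => if j == i then true else x j].

Definition mono_nonincr (R : realType) (m : nat) (f : cube m -> R) : Prop :=
  forall x y : cube m, cle x y -> f y <= f x.

Definition submodular (R : realType) (m : nat) (g : cube m -> R) : Prop :=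
  forall (i : 'I_m) (x y : cube m), cle x y -> x i = false -> y i = false ->
    g (adde y i) - g y <= g (adde x i) - g x.

Definition hdist (R : realType) (m : nat) (f h : cube m -> R) : nat :=
  #|[set x : cube m | f x != h x]|.

Definition far (R : realType) (m : nat) (P : (cube m -> R) -> Prop)
  (eps : R) (f : cube m -> R) : Prop :=
  forall h : cube m -> R, P h -> eps * (2 ^ m)%:R < (hdist f h)%:R.

(* Main.v *)
Require Import Defs.
From mathcomp Require Import all_boot all_order all_algebra.
From mathcomp Require Import reals.
From mathcomp Require Import ring lra.
Import Order.TTheory GRing.Theory Num.Theory.
Local Open Scope ring_scope.

Section Aux.
Variable R : realType.
Variable n : nat.

Definition phi (u : R) : R := u / (1 + `|u|).

Lemma phi_lt (a b : R) : a < b -> phi a < phi b.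
Proof.
move=> ab; rewrite /phi.
have ha : 0 < 1 + `|a| by rewrite ltr_pwDl.
have hb : 0 < 1 + `|b| by rewrite ltr_pwDl.
rewrite ltr_pdivrMr // mulrAC ltr_pdivlMr //.
case: (lerP 0 a) => a0; case: (lerP 0 b) => b0.
- rewrite (ger0_norm a0) (ger0_norm b0); nra.
- lra.
- rewrite (ltr0_norm a0) (ger0_norm b0); nra.
- rewrite (ltr0_norm a0) (ltr0_norm b0); nra.
Qed.

Lemma phi_bound (a : R) : -1 < phi a < 1.
Proof.
rewrite /phi.
have ha : 0 < 1 + `|a| by rewrite ltr_pwDl.
rewrite ltr_pdivrMr // ltr_pdivlMr //.
case: (lerP 0 a) => a0.
- rewrite (ger0_norm a0); apply/andP; split; lra.
- rewrite (ltr0_norm a0); apply/andP; split; lra.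
Qed.

Definition low (z : cube n.+1) : cube n := [ffun j => z (lift ord_max j)].
Definition top (z : cube n.+1) : bool := z ord_max.
Definition ext (x : cube n) (b : bool) : cube n.+1 :=
  [ffun i => if unlift ord_max i is Some j then x j else b].
Definition W (z : cube n.+1) : nat := #|[set j | low z j]|.

Definition G (f : cube n -> R) (z : cube n.+1) : R :=
  (if top z then phi (f (low z)) else 0) - 2 * (W z)%:R ^+ 2.

Lemma low_ext (x : cube n) (b : bool) : low (ext x b) = x.
Proof. by apply/ffunP => j; rewrite !ffunE liftK. Qed.

Lemma top_ext (x : cube n) (b : bool) : top (ext x b) = b.
Proof. by rewrite /top ffunE unlift_none. Qed.

Lemma adde_ext (x : cube n) : adde (ext x false) ord_max = ext x true.
Proof.
apply/ffunP => i; rewrite !ffunE; case: unliftP => [j ->|->]; last by rewrite eqxx.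
by rewrite eq_sym (negbTE (neq_lift _ _)).
Qed.

Lemma low_adde_max (z : cube n.+1) : low (adde z ord_max) = low z.
Proof. by apply/ffunP => j; rewrite !ffunE eq_sym (negbTE (neq_lift _ _)). Qed.

Lemma top_adde_max (z : cube n.+1) : top (adde z ord_max) = true.
Proof. by rewrite /top ffunE eqxx. Qed.

Lemma low_adde_lift (z : cube n.+1) (j : 'I_n) : low (adde z (lift ord_max j)) = adde (low z) j.
Proof.
apply/ffunP => k; rewrite !ffunE (inj_eq (@lift_inj _ ord_max)).
by case: (k == j) => //; rewrite ffunE.
Qed.

Lemma top_adde_lift (z : cube n.+1) (j : 'I_n) : top (adde z (lift ord_max j)) = top z.
Proof. by rewrite /top ffunE (negbTE (neq_lift _ _)). Qed.

Lemma W_adde_lift (z : cube n.+1) (j : 'I_n) : z (lift ord_max j) = false ->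
  W (adde z (lift ord_max j)) = (W z).+1.
Proof.
move=> zj; rewrite /W low_adde_lift.
have -> : [set k | adde (low z) j k] = j |: [set k | low z k].
  by apply/setP => k; rewrite !inE ffunE; case: (k == j).
by rewrite cardsU1 inE ffunE zj.
Qed.

Lemma cle_low (x y : cube n.+1) : cle x y -> cle (low x) (low y).
Proof. by move=> h j; rewrite !ffunE. Qed.

Lemma cle_top (x y : cube n.+1) : cle x y -> (top x <= top y)%N.
Proof. by move=> h; apply: h. Qed.

Lemma W_le (x y : cube n.+1) : cle x y -> (W x <= W y)%N.
Proof.
move=> h; apply: subset_leq_card; apply/subsetP => j; rewrite !inE => hx.
have := cle_low _ _ h j; rewrite hx; by case: (low y j).
Qed.


Lemma W_eq (x y : cube n.+1) : cle x y -> W x = W y -> low x = low y.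
Proof.
move=> h e.
have sub : [set j | low x j] \subset [set j | low y j].
  apply/subsetP => j; rewrite !inE => hx.
  have := cle_low _ _ h j; rewrite hx; by case: (low y j).
have := subset_leqif_cards sub; rewrite /W in e; rewrite e => -[_].
rewrite eqxx => /esym/eqP eqs.
apply/ffunP => j; have := congr1 (fun A : {set 'I_n} => j \in A) eqs; by rewrite /= !inE.
Qed.

Lemma phi_le (a b : R) : a <= b -> phi a <= phi b.
Proof. by rewrite le_eqVlt => /orP[/eqP -> //| /phi_lt/ltW]. Qed.

Lemma phi_le_inv (a b : R) : phi a <= phi b -> a <= b.
Proof. by move=> h; rewrite leNgt; apply/negP => /phi_lt; rewrite ltNge h. Qed.

Lemma ifb (c : bool) (t : R) : -1 < (if c then phi t else 0) < 1.
Proof. by case: c; [exact: phi_bound | rewrite ltrN10 ltr01]. Qed.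

Lemma cle_adde (x : cube n) j : cle x (adde x j).
Proof. by move=> k; rewrite ffunE; case: (k == j) => //; rewrite leq_b1. Qed.

Lemma G_submod (f : cube n -> R) : mono_nonincr f -> submodular (G f).
Proof.
move=> mf i x y hxy xi yi; rewrite /G.
case: (unliftP ord_max i) xi yi => [j ->| ->] xi yi.
- rewrite !W_adde_lift // !top_adde_lift !low_adde_lift.
  have := W_le _ _ hxy; rewrite leq_eqVlt => /orP[/eqP e|lt].
  + have el := W_eq _ _ hxy e; rewrite e el.
    have := cle_top _ _ hxy; case: (top x); case: (top y) => // _.
    have := mf _ _ (cle_adde (low y) j) => /phi_le h; lra.
  + rewrite -(addn1 (W x)) -(addn1 (W y)) !natrD !mulr1n.
    have : ((W x)%:R + 1 <= (W y)%:R :> R) by rewrite natr1 ler_nat.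
    move: (W x)%:R (W y)%:R => a b ab.
    have := ifb (top y) (f (adde (low y) j)).
    have := ifb (top y) (f (low y)).
    have := ifb (top x) (f (adde (low x) j)).
    have := ifb (top x) (f (low x)).
    move=> /andP[? ?] /andP[? ?] /andP[? ?] /andP[? ?].
    have e1 : forall c : R, (c + 1) ^+ 2 = c ^+ 2 + 2 * c + 1 by move=> c; ring.
    rewrite !e1; lra.
- rewrite !low_adde_max !top_adde_max /top xi yi.
  have : W (adde x ord_max) = W x by rewrite /W low_adde_max.
  have : W (adde y ord_max) = W y by rewrite /W low_adde_max.
  move=> -> ->.
  have := mf _ _ (cle_low _ _ hxy) => /phi_le h; lra.
Qed.


Lemma cle_ext (x y : cube n) b : cle x y -> cle (ext x b) (ext y b).
Proof. by move=> h i; rewrite !ffunE; case: (unlift ord_max i). Qed.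

Lemma ext_max (x : cube n) b : ext x b ord_max = b.
Proof. by rewrite ffunE unlift_none. Qed.

Definition cleb {m : nat} (y x : cube m) : bool := [forall i, (y i <= x i)%N].

Lemma cleP {m : nat} (y x : cube m) : reflect (cle y x) (cleb y x).
Proof. exact: (iffP forallP). Qed.

Lemma G_far (f : cube n -> R) (eps : R) :
  far (@mono_nonincr R n) eps f -> far (@submodular R n.+1) (eps / 2) (G f).
Proof.
move=> hf s hs.
pose good (y : cube n) := (G f (ext y false) == s (ext y false)) &&
                          (G f (ext y true) == s (ext y true)).
have key : forall x y, good x -> good y -> cle x y -> f y <= f x.
  move=> x y /andP[/eqP gx0 /eqP gx1] /andP[/eqP gy0 /eqP gy1] hxy.
  have := hs ord_max (ext x false) (ext y false) (cle_ext _ _ _ hxy)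
    (ext_max _ _) (ext_max _ _).
  rewrite !adde_ext -gx0 -gx1 -gy0 -gy1 /G !top_ext !low_ext.
  have WE : forall z b, W (ext z b) = #|[set j | z j]|.
    by move=> z b; rewrite /W low_ext.
  rewrite !WE => h; apply: phi_le_inv; lra.
pose C := \big[Order.max/0]_y f y.
pose m (x : cube n) := \big[Order.min/C]_(y | good y && cleb y x) f y.
have mono_m : mono_nonincr m.
  move=> x x' hxx'; apply: le_bigmin; first exact: bigmin_le_id.
  move=> y /andP[gy /cleP hyx].
  apply: bigmin_le_cond; rewrite gy /=; apply/cleP => i.
  exact: leq_trans (hyx i) (hxx' i).
have mgood : forall y, good y -> m y = f y.
  move=> y gy; apply/le_anti/andP; split.
    by apply: bigmin_le_cond; rewrite gy /=; apply/cleP => i.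
  apply: le_bigmin; first exact: le_bigmax.
  by move=> z /andP[gz /cleP hzy]; apply: key.
have hd : (hdist f m <= hdist (G f) s)%N.
  rewrite /hdist; set D := [set z | G f z != s z].
  apply: (leq_trans _ (leq_imset_card low D)); apply: subset_leq_card.
  apply/subsetP => x; rewrite inE => hx.
  have ng : ~~ good x by apply: contra hx => gx; rewrite mgood.
  move: ng; rewrite negb_and => /orP[] h.
    by rewrite -(low_ext x false); apply: imset_f; rewrite inE.
  by rewrite -(low_ext x true); apply: imset_f; rewrite inE.
have := hf m mono_m.
rewrite expnS natrM.
have -> : eps / 2 * (2%:R * (2 ^ n)%:R) = eps * (2 ^ n)%:R by field.
move=> h; apply: (lt_le_trans h); by rewrite ler_nat.
Qed.

End Aux.

Theorem lemma11 (R : realType) (n : nat) :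
  exists G : (cube n -> R) -> (cube n.+1 -> R),
    (forall f : cube n -> R,
       (mono_nonincr f -> submodular (G f)) /\
       (forall eps : R, far (@mono_nonincr R n) eps f ->
                        far (@submodular R n.+1) (eps / 2) (G f))) /\
    (forall z : cube n.+1, exists (a b : cube n) (h : R -> R -> R),
       forall f : cube n -> R, G f z = h (f a) (f b)).
Proof.
exists (@G R n); split.
  move=> f; split; [exact: G_submod | exact: G_far].
move=> z; exists (low _ z), (low _ z).
exists (fun u _ => (if top _ z then @phi R u else 0 : R) - 2 * (W _ z)%:R ^+ 2).
by move=> f.
Qed.
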